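(* There exists a $\mathbb{C}$-algebra isomorphism $\eta_1:\hat H_{q^{-1}}\to\hat H_q$ such that $$t_0\mapsto t_0^{-1},\qquad t_1\mapsto t_0t_1^{-1}t_0^{-1},\qquad t_2\mapsto t_3^{-1}t_2^{-1}t_3,\qquad t_3\mapsto t_3^{-1}.$$ Moreover $\eta_1^2=1$, i.e. composing $\eta_1$ with the map $\hat H_q\to\hat H_{q^{-1}}$ given by the same formulas yields the identity.
   Context: $q\in\mathbb{C}^*$ is not a root of unity and a square root $q^{1/2}$ is fixed; $q^{-1/2}=(q^{1/2})^{-1}$ is used as the square root of $q^{-1}$. For $p\in\{q,q^{-1}\}$, the universal double affine Hecke algebra $\hat H_p$ of type $(C_1^\vee,C_1)$ is the $\mathbb{C}$-algebra with generators $t_n^{\pm1}$ $(n=0,1,2,3)$ and relations: $t_nt_n^{-1}=t_n^{-1}t_n=1$; $t_n+t_n^{-1}$ is central; $t_0t_1t_2t_3=p^{-1/2}$ (so $t_0t_1t_2t_3=q^{-1/2}$ in $\hat H_q$ and $t_0t_1t_2t_3=q^{1/2}$ in $\hat H_{q^{-1}}$). *)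

(* Defs.v *)
From HB Require Import structures.
From mathcomp Require Import all_boot all_order all_algebra.
From mathcomp Require Import reals.
From mathcomp Require Export complex.
Set Implicit Arguments. Unset Strict Implicit. Unset Printing Implicit Defensive.
Import GRing.Theory.
Local Open Scope ring_scope.

Definition i0 : 'I_4 := @Ordinal 4 0 isT.
Definition i1 : 'I_4 := @Ordinal 4 1 isT.
Definition i2 : 'I_4 := @Ordinal 4 2 isT.
Definition i3 : 'I_4 := @Ordinal 4 3 isT.

Definition central (A : pzRingType) (x : A) : Prop := forall y : A, x * y = y * x.

(* Elements t i (= t_i) and u i (= t_i^{-1}) of an F-algebra A satisfying the
   defining relations of the universal DAHA of type (C_1^vee, C_1), with
   t_0 t_1 t_2 t_3 = c (c = p^{-1/2}). *)
Record daha_rel (F : fieldType) (A : algType F) (c : F) (t u : 'I_4 -> A) : Prop := {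
  daha_inv_r : forall i, t i * u i = 1;
  daha_inv_l : forall i, u i * t i = 1;
  daha_central : forall i, central (t i + u i);
  daha_prod : t i0 * t i1 * t i2 * t i3 = c%:A }.

(* (A, t, u) is the F-algebra presented by generators t_i^{±1} and the above
   relations: it satisfies the relations and is initial among such data. *)
Arguments daha_rel : clear implicits.
Definition daha_universal (F : fieldType) (A : algType F) (c : F) (t u : 'I_4 -> A) : Prop :=
  daha_rel F A c t u /\
  forall (B : algType F) (tB uB : 'I_4 -> B), daha_rel F B c tB uB ->
    (exists f : {lrmorphism A -> B}, forall i, f (t i) = tB i /\ f (u i) = uB i) /\
    (forall f g : {lrmorphism A -> B},
        (forall i, f (t i) = g (t i) /\ f (u i) = g (u i)) -> f =1 g).
Arguments daha_universal : clear implicits.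

(* Main.v *)
Require Import Defs.
From HB Require Import structures.
From mathcomp Require Import all_boot all_order all_algebra.
From mathcomp Require Import reals complex.
Import GRing.Theory.
Local Open Scope ring_scope.

Definition etaT (F : fieldType) (A : algType F) (t u : 'I_4 -> A) (i : 'I_4) : A :=
  match val i with
  | 0 => u i0 | 1 => t i0 * u i1 * u i0 | 2 => u i3 * u i2 * t i3 | _ => u i3 end.
Definition etaU (F : fieldType) (A : algType F) (t u : 'I_4 -> A) (i : 'I_4) : A :=
  match val i with
  | 0 => t i0 | 1 => t i0 * t i1 * u i0 | 2 => u i3 * t i2 * t i3 | _ => t i3 end.

Arguments etaT {F A}.
Arguments etaU {F A}.

Lemma ord4P (P : 'I_4 -> Prop) : P i0 -> P i1 -> P i2 -> P i3 -> forall i, P i.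
Proof.
move=> H0 H1 H2 H3 [[|[|[|[|k]]]] Hk] //.
- by rewrite (_ : Ordinal Hk = i0) //; apply: val_inj.
- by rewrite (_ : Ordinal Hk = i1) //; apply: val_inj.
- by rewrite (_ : Ordinal Hk = i2) //; apply: val_inj.
- by rewrite (_ : Ordinal Hk = i3) //; apply: val_inj.
Qed.

Lemma eta_rel (F : fieldType) (A : algType F) (c : F) (t u : 'I_4 -> A) :
  c != 0 -> daha_rel F A c t u -> daha_rel F A c^-1 (etaT t u) (etaU t u).
Proof.
move=> c0 [Hr Hl Hc Hp].
have tuK i x : t i * (u i * x) = x by rewrite mulrA Hr mul1r.
have utK i x : u i * (t i * x) = x by rewrite mulrA Hl mul1r.
have simp : forall x : A, x = x by [].
split.
- apply: ord4P; rewrite /etaT /etaU /= -?mulrA; do 3 rewrite ?utK ?tuK; by rewrite ?Hr ?Hl.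
- apply: ord4P; rewrite /etaT /etaU /= -?mulrA; do 3 rewrite ?utK ?tuK; by rewrite ?Hr ?Hl.
- apply: ord4P; rewrite /etaT /etaU /=.
  + by rewrite addrC; apply: Hc.
  + have -> : t i0 * u i1 * u i0 + t i0 * t i1 * u i0 = t i1 + u i1.
      by rewrite -mulrDl -mulrDr addrC -(Hc i1 (t i0)) -mulrA Hr mulr1.
    exact: Hc.
  + have -> : u i3 * u i2 * t i3 + u i3 * t i2 * t i3 = t i2 + u i2.
      by rewrite -mulrDl -mulrDr addrC -(Hc i2 (u i3)) -mulrA Hl mulr1.
    exact: Hc.
  + by rewrite addrC; apply: Hc.
- rewrite /etaT /=.
  have X : u i3 * u i2 * u i1 * u i0 = c^-1%:A.
    have H1 : c%:A * (u i3 * u i2 * u i1 * u i0) = 1.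
      rewrite -Hp -!mulrA; do 4 rewrite ?tuK; by rewrite Hr.
    have E : c^-1%:A * c%:A = 1 :> A by rewrite -scalerAl mul1r scalerA mulVf // scale1r.
    by have := congr1 (fun z => c^-1%:A * z) H1; rewrite /= mulr1 mulrA E mul1r.
  have Y : u i1 * u i0 = t i2 * t i3 * c^-1%:A.
    by rewrite -X -!mulrA (tuK i3) (tuK i2).
  rewrite -!mulrA utK Hr mulr1 mulrA Y -!mulrA mulr_algl -!scalerAr.
  by rewrite (tuK i3) Hr.
Qed.

Lemma etaT_ext (F : fieldType) (A : algType F) (t u t' u' : 'I_4 -> A) :
  t =1 t' -> u =1 u' -> forall i, etaT t u i = etaT t' u' i /\ etaU t u i = etaU t' u' i.
Proof. by move=> Ht Hu i; rewrite /etaT /etaU !Ht !Hu. Qed.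

Lemma etaT_morph (F : fieldType) (A B : algType F) (f : {lrmorphism A -> B})
  (t u : 'I_4 -> A) i :
  f (etaT t u i) = etaT (f \o t) (f \o u) i /\ f (etaU t u i) = etaU (f \o t) (f \o u) i.
Proof. by move: i; apply: ord4P; rewrite /etaT /etaU /= ?rmorphM. Qed.

Lemma etaTT (F : fieldType) (A : algType F) (c : F) (t u : 'I_4 -> A) :
  daha_rel F A c t u ->
  forall i, etaT (etaT t u) (etaU t u) i = t i /\ etaU (etaT t u) (etaU t u) i = u i.
Proof.
move=> [Hr Hl _ _].
have tuK i x : t i * (u i * x) = x by rewrite mulrA Hr mul1r.
have utK i x : u i * (t i * x) = x by rewrite mulrA Hl mul1r.
apply: ord4P; rewrite /etaT /etaU /= -?mulrA; do 3 rewrite ?utK ?tuK;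
  by rewrite ?Hr ?Hl ?mulr1.
Qed.

Arguments eta_rel {F A c t u}.
Arguments etaT_ext {F A t u t' u'}.
Arguments etaT_morph {F A B}.
Arguments etaTT {F A c t u}.

Local Open Scope complex_scope.

Theorem lemma10p1 (R : realType) (q12 : R[i]) (Hq12 : q12 != 0)
  (Hq : forall n : nat, (0 < n)%N -> (q12 ^+ 2) ^+ n != 1)
  (Hqp : algType R[i]) (tq uq : 'I_4 -> Hqp)
  (HHq : daha_universal _ Hqp q12^-1 tq uq)
  (Hqm : algType R[i]) (tm um : 'I_4 -> Hqm)
  (HHm : daha_universal _ Hqm q12 tm um) :
  exists (eta : {lrmorphism Hqm -> Hqp}) (eta' : {lrmorphism Hqp -> Hqm}),
    (eta (tm i0) = uq i0 /\
        eta (tm i1) = tq i0 * uq i1 * uq i0 /\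
        eta (tm i2) = uq i3 * uq i2 * tq i3 /\
        eta (tm i3) = uq i3) /\
    (eta' (tq i0) = um i0 /\
        eta' (tq i1) = tm i0 * um i1 * um i0 /\
        eta' (tq i2) = um i3 * um i2 * tm i3 /\
        eta' (tq i3) = um i3) /\
    cancel eta eta' /\ cancel eta' eta.
Proof.
case: HHq => Rq Uq; case: HHm => Rm Um.
have Rq' := eta_rel (invr_neq0 Hq12) Rq; rewrite invrK in Rq'.
have Rm' := eta_rel Hq12 Rm.
case: (Um _ _ _ Rq') => [[eta Heta] _].
case: (Uq _ _ _ Rm') => [[eta' Heta'] _].
exists eta, eta'.
split; first by rewrite !(fun i => (Heta i).1).
split; first by rewrite !(fun i => (Heta' i).1).
split.
- have := (Um _ _ _ Rm).2 (eta' \o eta) idfun; apply => i /=.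
  rewrite (Heta i).1 (Heta i).2 (etaT_morph eta' tq uq i).1 (etaT_morph eta' tq uq i).2.
  rewrite (etaT_ext (fun j => (Heta' j).1) (fun j => (Heta' j).2) i).1.
  rewrite (etaT_ext (fun j => (Heta' j).1) (fun j => (Heta' j).2) i).2.
  by rewrite (etaTT Rm i).1 (etaTT Rm i).2.
- have := (Uq _ _ _ Rq).2 (eta \o eta') idfun; apply => i /=.
  rewrite (Heta' i).1 (Heta' i).2 (etaT_morph eta tm um i).1 (etaT_morph eta tm um i).2.
  rewrite (etaT_ext (fun j => (Heta j).1) (fun j => (Heta j).2) i).1.
  rewrite (etaT_ext (fun j => (Heta j).1) (fun j => (Heta j).2) i).2.
  by rewrite (etaTT Rq i).1 (etaTT Rq i).2.
Qed.
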